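(* (''Length contraction/extension'' formula.) Let $A$, $B$, $C$ be inertial bodies such that $v_{AC}=v_{BC}$. Let $\Delta x=|x_{AA}(\tau_A)-x_{BA}(\tau_A)|$ be the distance between $A$ and $B$ in the reference frame $O_A$, and let $\Delta x'=|x_{AC}(\tau_C)-x_{BC}(\tau_C)|$ be the distance between $A$ and $B$ in the reference frame $O_C$. Then $\Delta x'=w_{CA}\cdot\Delta x$.
   Context: Events are column vectors $(x,\tau)^T$. Each inertial body $X$ carries a reference frame $O_X$ whose time coordinate is the proper time $\tau_X$ of $X$. For inertial bodies $X,Y$, $x_{XY}(\tau_Y)$ and $\tau_{XY}(\tau_Y)$ denote the spatial coordinate and proper time of $X$ at moment $\tau_Y$ in frame $O_Y$, and $v_{XY}$, $w_{XY}$ the constant spatial velocity and proper time velocity of $X$ in $O_Y$, so $x_{XY}(\tau_Y)=x_{XY}(0)+v_{XY}\tau_Y$ and $\tau_{XY}(\tau_Y)=\tau_{XY}(0)+w_{XY}\tau_Y$; by convention $x_{XX}\equiv0$, $v_{XX}=0$, $w_{XX}=1$, $\tau_{XX}(\tau_X)=\tau_X$. The coordinates of the same event in two inertial frames $O_X$, $O_Y$ are related by an affine map $L_{XY}:O_X\to O_Y$; when the origins coincide it is linear, $L_{XY}=\begin{pmatrix}1/w_{XY} & v_{XY}/w_{XY}\\ v_{XY}/w_{XY} & 1/w_{XY}\end{pmatrix}$; maps compose ($L_{XZ}=L_{YZ}L_{XY}$) and $L_{YX}=L_{XY}^{-1}$. *)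

(* Defs.v *)
From Stdlib Require Import Reals.
Open Scope R_scope.

(* An event is a column vector (x, tau)^T, represented as a pair. *)
Definition event := (R * R)%type.

Definition Lmat (v w : R) (e : event) : event :=
  ((1 / w) * fst e + (v / w) * snd e, (v / w) * fst e + (1 / w) * snd e).

Definition addev (e b : event) : event := (fst e + fst b, snd e + snd b).

(* For bodies X Y:
     xb X Y t = x_{XY}(t)   (spatial coordinate of X at moment t of O_Y)
     tb X Y t = tau_{XY}(t) (proper time of X at moment t of O_Y)
     vb X Y   = v_{XY},  wb X Y = w_{XY}
     Lb X Y   = L_{XY} : O_X -> O_Y. *)
Record Kinematics := {
  Body : Type;
  xb : Body -> Body -> R -> R;
  tb : Body -> Body -> R -> R;
  vb : Body -> Body -> R;
  wb : Body -> Body -> R;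
  Lb : Body -> Body -> event -> event;
  xb_lin : forall X Y t, xb X Y t = xb X Y 0 + vb X Y * t;
  tb_lin : forall X Y t, tb X Y t = tb X Y 0 + wb X Y * t;
  xb_self : forall X t, xb X X t = 0;
  vb_self : forall X, vb X X = 0;
  wb_self : forall X, wb X X = 1;
  tb_self : forall X t, tb X X t = t;
  (* proper time runs forward: proper time velocities are positive *)
  wb_pos : forall X Y, 0 < wb X Y;
  Lb_affine : forall X Y, exists b : event,
      forall e, Lb X Y e = addev (Lmat (vb X Y) (wb X Y) e) b;
  Lb_comp : forall X Y Z e, Lb X Z e = Lb Y Z (Lb X Y e);
  Lb_inv : forall X Y e, Lb Y X (Lb X Y e) = e /\ Lb X Y (Lb Y X e) = e;
  (* L_{XY} relates the coordinates of the same event: the event where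
     body Z is at moment s of O_X (with proper time tau_{ZX}(s)) is, in O_Y,
     the event where Z is at some moment t of O_Y, with the same proper time. *)
  Lb_events : forall X Y Z s, exists t,
      Lb X Y (xb Z X s, s) = (xb Z Y t, t) /\ tb Z Y t = tb Z X s
}.

Arguments xb {k}. Arguments tb {k}. Arguments vb {k}.
Arguments wb {k}. Arguments Lb {k}.

(* Main.v *)
Require Import Defs.
From Stdlib Require Import Reals Lra Psatz.
Open Scope R_scope.

Theorem corollary4 (K : Kinematics) (A B C : Body K) :
  vb A C = vb B C ->
  forall tauA tauC : R,
    Rabs (xb A C tauC - xb B C tauC) = wb C A * Rabs (xb A A tauA - xb B A tauA).
Proof.
  intros Hv tauA tauC.
  destruct (Lb_affine K A C) as [[b1 b2] HAC].
  destruct (Lb_affine K C A) as [[c1 c2] HCA].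
  pose proof (wb_pos K A C) as Hw. pose proof (wb_pos K C A) as Hw'.
  set (v := vb A C) in *. set (w := wb A C) in *.
  set (v' := vb C A) in *. set (w' := wb C A) in *.
  pose proof (proj1 (Lb_inv K A C (0,0))) as I0.
  pose proof (proj1 (Lb_inv K A C (1,0))) as I1.
  rewrite HAC, HCA in I0, I1. unfold Lmat, addev in I0, I1; simpl in I0, I1.
  injection I0 as I0a I0b. injection I1 as I1a I1b.
  assert (E1 : w * w' = 1 + v' * v).
  { assert (1/w' * (1/w) + v'/w' * (v/w) = 1) by lra.
    assert (1 + v'*v = (1/w' * (1/w) + v'/w' * (v/w)) * (w*w')) by (field; lra).
    rewrite H0, H; ring. }
  assert (E2 : v' = - v).
  { assert (v'/w' * (1/w) + 1/w' * (v/w) = 0) by lra.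
    assert (v' + v = (v'/w' * (1/w) + 1/w' * (v/w)) * (w*w')) by (field; lra).
    rewrite H in H0; lra. }
  destruct (Lb_events K A C B 0) as [t0 [T0 _]].
  destruct (Lb_events K A C B 1) as [t1 [T1 _]].
  destruct (Lb_events K A C A 0) as [ta [Ta _]].
  rewrite HAC in T0, T1, Ta. unfold Lmat, addev in T0, T1, Ta; simpl in T0, T1, Ta.
  injection T0 as T0a T0b. injection T1 as T1a T1b. injection Ta as Taa Tab.
  rewrite (xb_lin K B A 1), (xb_lin K B C t1) in T1a.
  rewrite (xb_lin K B A 1) in T1b.
  rewrite (xb_lin K B C t0) in T0a.
  rewrite (xb_lin K A C ta), xb_self in Taa. rewrite xb_self in Tab.
  rewrite <- Hv in T0a, T1a. fold v in T0a, T1a, Taa.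
  set (x0 := xb B A 0) in *. set (u := vb B A) in *.
  set (xb0 := xb B C 0) in *. set (xa0 := xb A C 0) in *.
  assert (Hu : u = 0).
  { assert (Hd : t1 - t0 = v*u/w + 1/w) by lra.
    assert (Hd2 : 1/w*u + v/w = v*(t1-t0)) by lra.
    assert (Hq : u*(1-v*v) = w*(1/w*u + v/w - v*(v*u/w + 1/w))) by (field; lra).
    rewrite <- Hd, <- Hd2, Rminus_diag, Rmult_0_r in Hq.
    apply Rmult_integral in Hq. destruct Hq; [auto|nra]. }
  rewrite xb_self, (xb_lin K A C tauC), (xb_lin K B C tauC), (xb_lin K B A tauA), <- Hv.
  fold v x0 u xb0 xa0. rewrite Hu.
  assert (xa0 - xb0 = - x0 * w').
  { assert (Hxb : xb0 = x0/w + b1 - v*t0) by (replace (x0/w) with (1/w*x0) by (field; lra); lra).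
    assert (Ht0 : t0 = v*(x0/w) + b2) by (replace (v*(x0/w)) with (v/w*x0) by (field; lra); lra).
    assert (Hta : ta = b2) by (rewrite <- Tab; ring).
    assert (Hb1 : b1 = xa0 + v*ta) by (rewrite <- Taa; ring).
    assert (Hxa : xa0 = b1 - v*b2) by (rewrite Hb1, Hta; ring).
    assert (Hw'e : w' = (1 - v*v)/w).
    { apply (Rmult_eq_reg_l w); [|lra]. rewrite E1, E2. field. lra. }
    rewrite Hxb, Ht0, Hw'e, Hxa. field. lra. }
  replace (xa0 + v * tauC - (xb0 + v * tauC)) with (- x0 * w') by lra.
  replace (0 - (x0 + 0 * tauA)) with (- x0) by ring.
  rewrite Rabs_mult, (Rabs_pos_eq w') by lra. ring.
Qed.
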